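(* Let $\Sigma$ be a signature on standard form over a variable system with the de Bruijn property, $F=(F,\sigma,\theta):\mathcal F_\Sigma\to\mathcal C$ a cwf morphism, and $\Pi$ a predicate signature on standard form over $\Sigma$. Let $\mathcal D=(\mathcal C,\mathrm{Pr}^{\mathcal D},\forall',\exists')$ be a first-order hyperdoctrine over $\mathcal C$, and suppose that for each $(\Gamma_R,R)\in\Pi$ an element $R^*\in\mathrm{Pr}^{\mathcal D}(F(\Gamma_R))$ is given. Then there is a unique $F$-based hyperdoctrine morphism $G:\mathcal H_{\Sigma,\Pi,\emptyset}\to\mathcal D$ with $G_{\Gamma_R}(\Gamma_R,R(\mathrm{OV}(\Gamma_R)))=R^*$ for each $(\Gamma_R,R)\in\Pi$.
   Context: Type system: fix an infinite set $V$ of variables with decidable equality and a fresh variable provider: functions $\varphi,\mathsf{fr}$ assigning to each finite $X\subseteq V$ an inhabited $\varphi(X)\subseteq V\setminus X$ and $\mathsf{fr}(X)\in\varphi(X)$; de Bruijn property: $\varphi(X)=\{\mathsf{fr}(X)\}$. Disjoint sets $F$ (function symbols), $T$ (type symbols). Preelements: terms from variables and $F$; pretypes $S(t_1,\ldots,t_n)$, $S\in T$. $\mathrm V(E)$: variables of $E$; $E[\bar a/\bar x]$: simultaneous substitution. Precontext $\Gamma=x_1:A_1,\ldots,x_n:A_n$ with $x_k\in\varphi(\{x_1,\ldots,x_{k-1}\})$, $\mathrm V(A_k)\subseteq\{x_1,\ldots,x_{k-1}\}$; $\mathrm{OV}(\Gamma)=x_1,\ldots,x_n$; $\mathrm{Fresh}(\Gamma)=\varphi(\mathrm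 V(\Gamma))$, $\mathrm{fresh}(\Gamma)=\mathsf{fr}(\mathrm V(\Gamma))$; $E[\bar a/\Gamma]=E[\bar a/x_1,\ldots,x_n]$. Top variables $\mathrm{TV}(\langle\rangle)=\emptyset$, $\mathrm{TV}(\Gamma,x:A)=(\mathrm{TV}(\Gamma)\setminus\mathrm V(A))\cup\{x\}$; a determining sequence is a strictly increasing $\bar i=i_1,\ldots,i_k$ with $\mathrm{TV}(\Gamma)\subseteq\{x_{i_1},\ldots,x_{i_k}\}$, $\bar a_{\bar i}=a_{i_1},\ldots,a_{i_k}$; a declaration is on standard form if $\bar i=1,\ldots,n$ (then $\bar i$ is omitted). Declarations $(\Gamma,S,\bar i)$ and $(\Gamma,f,\bar i,U)$ ($\mathrm V(U)\subseteq\mathrm V(\Gamma)$), each symbol at most once. $\mathcal J(\Sigma)$: smallest set of judgements closed under (R1) $\langle\rangle$ context; (R2) $\Gamma$ context, $A$ type $(\Gamma)$ $\Rightarrow$ $\Gamma,x:A$ context ($x\in\mathrm{Fresh}(\Gamma)$); (R3) $x_1:A_1,\ldots,x_n:A_n$ context $\Rightarrow$ $x_i:A_i\ (x_1:A_1,\ldots,x_n:A_n)$; (R4) $(\Gamma,S,\bar i)\in\Sigma$, $\bar a:\Delta\to\Gamma$ $\Rightarrow$ $S(\bar a_{\bar i})$ type $(\Delta)$; (R5) $(\Gamma,f,\bar i,U)\in\Sigma$, $\bar a:\Delta\to\Gamma$, $U[\bar a/\Gamma]$ type $(\Delta)$ $\Rightarrow$ $f(\bar a_{\bar i}):U[\bar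 a/\Gamma]\ (\Delta)$; where ''$\bar a:\Delta\to\Gamma$'' abbreviates $\Delta$ context, $\Gamma$ context, $a_k:A_k[a_1,\ldots,a_{k-1}/x_1,\ldots,x_{k-1}]\ (\Delta)$. $\Sigma$ is a signature if declared contexts are contexts and declared $U$ are types in $\mathcal J(\Sigma)$. Cwf: a category $\mathcal C$ with terminal object; classes $\mathrm{Ty}(\Gamma)$ with functorial substitution $A\{f\}$; context extension $\Gamma.A$ with $\mathrm p(A):\Gamma.A\to\Gamma$; classes $\mathrm{Tm}(\Gamma,A)$ with functorial $a\{f\}\in\mathrm{Tm}(\Delta,A\{f\})$; $\mathrm v_A\in\mathrm{Tm}(\Gamma.A,A\{\mathrm p(A)\})$; $\langle f,a\rangle_A:\Delta\to\Gamma.A$ for $a\in\mathrm{Tm}(\Delta,A\{f\})$ with $\mathrm p(A)\langle f,a\rangle_A=f$, $\mathrm v_A\{\langle f,a\rangle_A\}=a$, $\langle\mathrm p(A)h,\mathrm v_A\{h\}\rangle_A=h$, $\langle f,a\rangle_A g=\langle fg,a\{g\}\rangle_A$; $f.A=\langle f\circ\mathrm p(A\{f\}),\mathrm v_{A\{f\}}\rangle_A:\Delta.A\{f\}\to\Gamma.A$. A cwf morphism $(F,\sigma,\theta):\mathcal C\to\mathcal C'$: a functor $F$ preserving the terminal object, $\sigma_\Gamma:\mathrm{Ty}(\Gamma)\to\mathrm{Ty}'(F\Gamma)$ with $\sigma_\Delta(A\{f\})=\sigma_\Gamma(A)\{Ff\}$, $F(\Gamma.A)=F\Gamma.\sigma_\Gamma(A)$,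 $F(\mathrm p(A))=\mathrm p(\sigma_\Gamma(A))$, and $\theta_{\Gamma,A}:\mathrm{Tm}(\Gamma,A)\to\mathrm{Tm}'(F\Gamma,\sigma_\Gamma(A))$ commuting with substitution, with $\theta(\mathrm v_A)=\mathrm v_{\sigma_\Gamma(A)}$ and $F\langle f,a\rangle_A=\langle Ff,\theta(a)\rangle_{\sigma_\Gamma(A)}$. The cwf $\mathcal F_\Sigma$: objects are contexts $\Gamma$ (i.e. ($\Gamma$ context)$\in\mathcal J(\Sigma)$); morphisms $(\Delta,\Gamma,\bar a)$ with $\bar a:\Delta\to\Gamma$ in $\mathcal J(\Sigma)$, composed by substitution, identity $(\Gamma,\Gamma,\mathrm{OV}(\Gamma))$; $\mathrm{Ty}(\Gamma)=\{(\Gamma,A):(A\text{ type }(\Gamma))\in\mathcal J(\Sigma)\}$, $(\Gamma,A)\{(\Delta,\Gamma,\bar a)\}=(\Delta,A[\bar a/\Gamma])$; $\mathrm{Tm}(\Gamma,(\Gamma,A))=\{((\Gamma,A),a):(a:A\ (\Gamma))\in\mathcal J(\Sigma)\}$; $\Gamma.(\Gamma,S)=\langle\Gamma,\mathrm{fresh}(\Gamma):S\rangle$, $\mathrm p=(\Gamma.(\Gamma,S),\Gamma,\mathrm{OV}(\Gamma))$, $\mathrm v=((\Gamma.(\Gamma,S),S),\mathrm{fresh}(\Gamma))$, $\langle(\Delta,\Gamma,\bar s),((\Delta,S[\bar s/\Gamma]),b)\rangle=(\Delta,\Gamma.(\Gamma,S),(\bar s,b))$. Heyting (pre)algebra: a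 preorder $\le$ (not necessarily antisymmetric) with $\top,\bot,\wedge,\vee,\to$ satisfying $\bot\le x\le\top$, $z\le x\wedge y$ iff $z\le x$ and $z\le y$, $x\vee y\le z$ iff $x\le z$ and $y\le z$, $z\le(x\to y)$ iff $z\wedge x\le y$; morphisms are monotone maps preserving the operations and constants. A first-order hyperdoctrine over a cwf $\mathcal C$ is $(\mathcal C,\mathrm{Pr},\forall,\exists)$ with $\mathrm{Pr}:\mathcal C^{\mathrm{op}}\to\mathrm{Heyting}$ a functor ($R\{f\}=\mathrm{Pr}(f)(R)$) and, for $S\in\mathrm{Ty}(\Gamma)$, monotone $\forall_S,\exists_S:\mathrm{Pr}(\Gamma.S)\to\mathrm{Pr}(\Gamma)$ with $Q\le\forall_S(R)$ iff $Q\{\mathrm p(S)\}\le R$, and $\exists_S(R)\le Q$ iff $R\le Q\{\mathrm p(S)\}$ ($Q\in\mathrm{Pr}(\Gamma)$, $R\in\mathrm{Pr}(\Gamma.S)$), and for $f:\Delta\to\Gamma$: $\forall_S(R)\{f\}=\forall_{S\{f\}}(R\{f.S\})$, $\exists_S(R)\{f\}=\exists_{S\{f\}}(R\{f.S\})$. Given a cwf morphism $F=(F,\sigma,\theta):\mathcal C\to\mathcal C'$ and hyperdoctrines $\mathcal H=(\mathcal C,\mathrm{Pr},\forall,\exists)$, $\mathcal H'=(\mathcal C',\mathrm{Pr}',\forall',\exists')$, an $F$-based morphism $G:\mathcal H\to\mathcal H'$ is a family of Heyting morphisms $G_\Gamma:\mathrm{Pr}(\Gamma)\to\mathrm{Pr}'(F\Gamma)$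 with $G_\Delta(R\{f\})=G_\Gamma(R)\{Ff\}$ for $f:\Delta\to\Gamma$, $G_\Gamma(\forall_S R)=\forall'_{\sigma_\Gamma(S)}(G_{\Gamma.S}R)$ and $G_\Gamma(\exists_S R)=\exists'_{\sigma_\Gamma(S)}(G_{\Gamma.S}R)$. Logic: predicate symbols from a set $P$ disjoint from $F\cup T$; a predicate declaration is $(\Gamma,\bar i,R)$ with ($\Gamma$ context)$\in\mathcal J(\Sigma)$, $\bar i$ determining, $R\in P$ (written $(\Gamma,R)$ on standard form); a predicate signature $\Pi$ declares each symbol at most once. $\mathrm{Form}(\Sigma,\Pi)$ is the smallest set of judgements ''$\phi$ form $(\Gamma)$'' with: $R(\bar a_{\bar i})$ form $(\Delta)$ for $(\Gamma,\bar i,R)\in\Pi$ and $\bar a:\Delta\to\Gamma$ in $\mathcal J(\Sigma)$; $\bot,\top$ form $(\Gamma)$ for contexts $\Gamma$; $(\phi\circ\psi)$ form $(\Gamma)$ for $\circ\in\{\wedge,\vee,\to\}$ from $\phi,\psi$ form $(\Gamma)$; $(Qx:A)\phi$ form $(\Gamma)$ for $Q\in\{\forall,\exists\}$ from $\phi$ form $(\Gamma,x:A)$ (with $(A\text{ type }(\Gamma))\in\mathcal J(\Sigma)$). Capture-avoiding substitution for $\bar a:\Delta\to\Gamma$: $\phi\{(\Delta,\Gamma,\bar a)\}=\phi[\bar a/\Gamma]$ for atomic $\phi$; it commutes with $\top,\bot,\wedge,\vee,\to$; and $((Qx:A)\theta)\{(\Delta,\Gamma,\bar a)\}=(Qy:A[\bar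 a/\Gamma])\,\theta\{(\langle\Delta,y:A[\bar a/\Gamma]\rangle,\langle\Gamma,x:A\rangle,(\bar a,y))\}$ with $y=\mathrm{fresh}(\Delta)$. A sequent is $\phi\Rightarrow_\Gamma\psi$ with $\phi,\psi$ form $(\Gamma)$; a theory is a set of sequents. Write $\mathbf p_\Gamma(x:A)=(\langle\Gamma,x:A\rangle,\Gamma,\mathrm{OV}(\Gamma))$. $\mathrm{Thm}(\Sigma,\Pi,T)$ is the smallest set of sequents containing $T$ and closed under: $\phi\Rightarrow_\Gamma\phi$; cut; $\theta\wedge\psi\Rightarrow_\Gamma\theta$, $\theta\wedge\psi\Rightarrow_\Gamma\psi$, from $\phi\Rightarrow_\Gamma\theta$, $\phi\Rightarrow_\Gamma\psi$ infer $\phi\Rightarrow_\Gamma\theta\wedge\psi$, $\phi\Rightarrow_\Gamma\top$; $\theta\Rightarrow_\Gamma\theta\vee\psi$, $\psi\Rightarrow_\Gamma\theta\vee\psi$, from $\theta\Rightarrow_\Gamma\phi$, $\psi\Rightarrow_\Gamma\phi$ infer $\theta\vee\psi\Rightarrow_\Gamma\phi$, $\bot\Rightarrow_\Gamma\phi$; $\theta\wedge\psi\Rightarrow_\Gamma\phi$ iff $\theta\Rightarrow_\Gamma\psi\to\phi$; $\phi\{\mathbf p_\Gamma(x:A)\}\Rightarrow_{\Gamma,x:A}\psi$ iff $\phi\Rightarrow_\Gamma(\forall x:A)\psi$; $\psi\Rightarrow_{\Gamma,x:A}\phi\{\mathbf p_\Gamma(x:A)\}$ iff $(\exists x:A)\psi\Rightarrow_\Gamma\phi$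 (each ''iff'' read as two rules); and substitution: from $\phi\Rightarrow_\Gamma\psi$ and $\bar a:\Delta\to\Gamma$ infer $\phi\{(\Delta,\Gamma,\bar a)\}\Rightarrow_\Delta\psi\{(\Delta,\Gamma,\bar a)\}$. Lindenbaum–Tarski hyperdoctrine $\mathcal H_{\Sigma,\Pi,T}=(\mathcal F_\Sigma,\mathrm{Pr}_{\Sigma,\Pi,T},\forall,\exists)$: $\mathrm{Pr}_{\Sigma,\Pi,T}(\Gamma)=\{(\Gamma,\phi):(\phi\text{ form }(\Gamma))\in\mathrm{Form}(\Sigma,\Pi)\}$ ordered by $(\Gamma,\phi)\le(\Gamma,\psi)$ iff $(\phi\Rightarrow_\Gamma\psi)\in\mathrm{Thm}(\Sigma,\Pi,T)$, Heyting operations given by the connectives; $\mathrm{Pr}((\Delta,\Gamma,\bar a))(\Gamma,\phi)=(\Delta,\phi\{(\Delta,\Gamma,\bar a)\})$; $\forall_{(\Gamma,A)}(\langle\Gamma,x:A\rangle,\psi)=(\Gamma,(\forall x:A)\psi)$, $\exists_{(\Gamma,A)}(\langle\Gamma,x:A\rangle,\psi)=(\Gamma,(\exists x:A)\psi)$. $\mathcal H_{\Sigma,\Pi,\emptyset}$ is the case $T=\emptyset$. *)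

(* Defs.v *)
From Stdlib Require Import List.
Import ListNotations.

(* Finite subsets of V are represented by lists; phi and fr only depend on
   the underlying set of the list (phi_ext, fr_ext). *)
Record VarSys := {
  var : Type;
  var_eq_dec : forall x y : var, {x = y} + {x <> y};
  phi : list var -> var -> Prop;
  fr : list var -> var;
  phi_ext : forall X Y : list var, (forall v, In v X <-> In v Y) ->
            forall v, phi X v <-> phi Y v;
  fr_ext : forall X Y : list var, (forall v, In v X <-> In v Y) -> fr X = fr Y;
  phi_fresh : forall X v, phi X v -> ~ In v X;
  fr_phi : forall X, phi X (fr X)
}.

Definition deBruijn (VS : VarSys) : Prop :=
  forall (X : list (var VS)) (v : var VS), phi VS X v <-> v = fr VS X.

(* A language: a variable system and pairwise disjoint sets of function,
   type and predicate symbols (disjointness = distinct types). *)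
Record Lang := {
  LV : VarSys;
  LF : Type;
  LT : Type;
  LP : Type
}.

Definition V (L : Lang) := var (LV L).

Inductive term (L : Lang) :=
| tvar (x : V L)
| tapp (f : LF L) (args : list (term L)).
Arguments tvar {L} x.
Arguments tapp {L} f args.

Inductive pretype (L : Lang) :=
| pty (S : LT L) (args : list (term L)).
Arguments pty {L} S args.

Definition ctx (L : Lang) := list (V L * pretype L).

Fixpoint tvars {L : Lang} (e : term L) : list (V L) :=
  match e with
  | tvar x => [x]
  | tapp _ args => flat_map tvars args
  end.

Definition yvars {L : Lang} (A : pretype L) : list (V L) :=
  match A with pty _ args => flat_map tvars args end.

Definition OV {L : Lang} (G : ctx L) : list (V L) := map fst G.

Definition cvars {L : Lang} (G : ctx L) : list (V L) :=
  flat_map (fun p => fst p :: yvars (snd p)) G.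

Definition fresh {L : Lang} (G : ctx L) : V L := fr (LV L) (cvars G).

(* simultaneous substitution [ts / xs] on a variable: first match *)
Fixpoint lookup {L : Lang} (xs : list (V L)) (ts : list (term L)) (y : V L)
  : term L :=
  match xs, ts with
  | x :: xs', t :: ts' =>
      if var_eq_dec (LV L) x y then t else lookup xs' ts' y
  | _, _ => tvar y
  end.

Fixpoint tsubst {L : Lang} (xs : list (V L)) (ts : list (term L)) (e : term L)
  : term L :=
  match e with
  | tvar y => lookup xs ts y
  | tapp f args => tapp f (map (tsubst xs ts) args)
  end.

Definition ysubst {L : Lang} (xs : list (V L)) (ts : list (term L))
  (A : pretype L) : pretype L :=
  match A with pty S0 args => pty S0 (map (tsubst xs ts) args) end.

(* Standard form: the determining sequence is 1..n, hence omitted.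
   A partial function declares each symbol at most once. *)
Record Sig (L : Lang) := {
  tdecl : LT L -> option (ctx L);
  fdecl : LF L -> option (ctx L * pretype L)
}.
Arguments tdecl {L} s _.
Arguments fdecl {L} s _.

(* In the premises "abar : Delta -> Gamma" is spelled out as:
   Delta context, Gamma context, |abar| = |Gamma| and
   a_k : A_k[a_1..a_{k-1}/x_1..x_{k-1}] (Delta). *)
Inductive IsCtx {L : Lang} (Sg : Sig L) : ctx L -> Prop :=
| R1 : IsCtx Sg []
| R2 : forall (G : ctx L) (A : pretype L) (x : V L),
    IsCtx Sg G -> IsType Sg G A -> phi (LV L) (cvars G) x ->
    IsCtx Sg (G ++ [(x, A)])
with IsType {L : Lang} (Sg : Sig L) : ctx L -> pretype L -> Prop :=
| R4 : forall (S : LT L) (G D : ctx L) (ts : list (term L)),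
    tdecl Sg S = Some G ->
    IsCtx Sg D -> IsCtx Sg G -> length ts = length G ->
    (forall k x A t, nth_error G k = Some (x, A) -> nth_error ts k = Some t ->
        HasType Sg D t (ysubst (firstn k (OV G)) (firstn k ts) A)) ->
    IsType Sg D (pty S ts)
with HasType {L : Lang} (Sg : Sig L) : ctx L -> term L -> pretype L -> Prop :=
| R3 : forall (G : ctx L) k x A,
    IsCtx Sg G -> nth_error G k = Some (x, A) -> HasType Sg G (tvar x) A
| R5 : forall (f : LF L) (G D : ctx L) (U : pretype L) (ts : list (term L)),
    fdecl Sg f = Some (G, U) ->
    IsCtx Sg D -> IsCtx Sg G -> length ts = length G ->
    (forall k x A t, nth_error G k = Some (x, A) -> nth_error ts k = Some t ->
        HasType Sg D t (ysubst (firstn k (OV G)) (firstn k ts) A)) ->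
    IsType Sg D (ysubst (OV G) ts U) ->
    HasType Sg D (tapp f ts) (ysubst (OV G) ts U).

Definition SubstMor {L : Lang} (Sg : Sig L) (D G : ctx L) (ts : list (term L))
  : Prop :=
  IsCtx Sg D /\ IsCtx Sg G /\ length ts = length G /\
  (forall k x A t, nth_error G k = Some (x, A) -> nth_error ts k = Some t ->
      HasType Sg D t (ysubst (firstn k (OV G)) (firstn k ts) A)).

(* Sigma is a signature: declared contexts are contexts and declared U are
   types (in their declared context).  (Declared contexts being precontexts and
   V(U) ⊆ V(Gamma) follow from these.) *)
Definition IsSignature {L : Lang} (Sg : Sig L) : Prop :=
  (forall S G, tdecl Sg S = Some G -> IsCtx Sg G) /\
  (forall f G U, fdecl Sg f = Some (G, U) -> IsCtx Sg G /\ IsType Sg G U).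

Definition PSig (L : Lang) := LP L -> option (ctx L).

Definition IsPredSig {L : Lang} (Sg : Sig L) (Pi : PSig L) : Prop :=
  forall R G, Pi R = Some G -> IsCtx Sg G.

Inductive form (L : Lang) :=
| fatom (R : LP L) (args : list (term L))
| fbot
| ftop
| fand (p q : form L)
| forr (p q : form L)
| fimp (p q : form L)
| fall (x : V L) (A : pretype L) (p : form L)
| fex (x : V L) (A : pretype L) (p : form L).
Arguments fatom {L} R args.
Arguments fbot {L}.
Arguments ftop {L}.
Arguments fand {L} p q.
Arguments forr {L} p q.
Arguments fimp {L} p q.
Arguments fall {L} x A p.
Arguments fex {L} x A p.

Inductive Form {L : Lang} (Sg : Sig L) (Pi : PSig L) : ctx L -> form L -> Prop :=
| Fm_atom : forall R G D ts, Pi R = Some G -> SubstMor Sg D G ts ->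
    Form Sg Pi D (fatom R ts)
| Fm_bot : forall G, IsCtx Sg G -> Form Sg Pi G fbot
| Fm_top : forall G, IsCtx Sg G -> Form Sg Pi G ftop
| Fm_and : forall G p q, Form Sg Pi G p -> Form Sg Pi G q -> Form Sg Pi G (fand p q)
| Fm_or : forall G p q, Form Sg Pi G p -> Form Sg Pi G q -> Form Sg Pi G (forr p q)
| Fm_imp : forall G p q, Form Sg Pi G p -> Form Sg Pi G q -> Form Sg Pi G (fimp p q)
| Fm_all : forall G x A p, IsType Sg G A -> Form Sg Pi (G ++ [(x, A)]) p ->
    Form Sg Pi G (fall x A p)
| Fm_ex : forall G x A p, IsType Sg G A -> Form Sg Pi (G ++ [(x, A)]) p ->
    Form Sg Pi G (fex x A p).

Fixpoint fsubst {L : Lang} (D G : ctx L) (ts : list (term L)) (p : form L)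
  : form L :=
  match p with
  | fatom R us => fatom R (map (tsubst (OV G) ts) us)
  | fbot => fbot
  | ftop => ftop
  | fand p1 p2 => fand (fsubst D G ts p1) (fsubst D G ts p2)
  | forr p1 p2 => forr (fsubst D G ts p1) (fsubst D G ts p2)
  | fimp p1 p2 => fimp (fsubst D G ts p1) (fsubst D G ts p2)
  | fall x A q =>
      let B := ysubst (OV G) ts A in
      let y := fresh D in
      fall y B (fsubst (D ++ [(y, B)]) (G ++ [(x, A)]) (ts ++ [tvar y]) q)
  | fex x A q =>
      let B := ysubst (OV G) ts A in
      let y := fresh D in
      fex y B (fsubst (D ++ [(y, B)]) (G ++ [(x, A)]) (ts ++ [tvar y]) q)
  end.

Definition pweak {L : Lang} (G : ctx L) (x : V L) (A : pretype L) (p : form L)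
  : form L :=
  fsubst (G ++ [(x, A)]) G (map tvar (OV G)) p.

(* Thm(Sigma, Pi, emptyset): Thm G p q  means  p =>_G q.
   Every rule only produces sequents (both sides formed in G); where this is
   not already guaranteed by the premises it is added as a premise. *)
Inductive Thm {L : Lang} (Sg : Sig L) (Pi : PSig L)
  : ctx L -> form L -> form L -> Prop :=
| T_id : forall G p, Form Sg Pi G p -> Thm Sg Pi G p p
| T_cut : forall G p q r, Thm Sg Pi G p q -> Thm Sg Pi G q r -> Thm Sg Pi G p r
| T_andE1 : forall G p q, Form Sg Pi G p -> Form Sg Pi G q ->
    Thm Sg Pi G (fand p q) p
| T_andE2 : forall G p q, Form Sg Pi G p -> Form Sg Pi G q ->
    Thm Sg Pi G (fand p q) q
| T_andI : forall G r p q, Thm Sg Pi G r p -> Thm Sg Pi G r q ->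
    Thm Sg Pi G r (fand p q)
| T_top : forall G p, Form Sg Pi G p -> Thm Sg Pi G p ftop
| T_orI1 : forall G p q, Form Sg Pi G p -> Form Sg Pi G q ->
    Thm Sg Pi G p (forr p q)
| T_orI2 : forall G p q, Form Sg Pi G p -> Form Sg Pi G q ->
    Thm Sg Pi G q (forr p q)
| T_orE : forall G p q r, Thm Sg Pi G p r -> Thm Sg Pi G q r ->
    Thm Sg Pi G (forr p q) r
| T_bot : forall G p, Form Sg Pi G p -> Thm Sg Pi G fbot p
| T_impI : forall G t p q, Thm Sg Pi G (fand t p) q -> Thm Sg Pi G t (fimp p q)
| T_impE : forall G t p q, Thm Sg Pi G t (fimp p q) -> Thm Sg Pi G (fand t p) q
| T_allI : forall G x A p q,
    Form Sg Pi G p -> Form Sg Pi G (fall x A q) ->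
    Thm Sg Pi (G ++ [(x, A)]) (pweak G x A p) q ->
    Thm Sg Pi G p (fall x A q)
| T_allE : forall G x A p q,
    Form Sg Pi (G ++ [(x, A)]) (pweak G x A p) -> Form Sg Pi (G ++ [(x, A)]) q ->
    Thm Sg Pi G p (fall x A q) ->
    Thm Sg Pi (G ++ [(x, A)]) (pweak G x A p) q
| T_exE : forall G x A p q,
    Form Sg Pi G (fex x A q) -> Form Sg Pi G p ->
    Thm Sg Pi (G ++ [(x, A)]) q (pweak G x A p) ->
    Thm Sg Pi G (fex x A q) p
| T_exI : forall G x A p q,
    Form Sg Pi (G ++ [(x, A)]) q -> Form Sg Pi (G ++ [(x, A)]) (pweak G x A p) ->
    Thm Sg Pi G (fex x A q) p ->
    Thm Sg Pi (G ++ [(x, A)]) q (pweak G x A p)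
| T_subst : forall D G ts p q,
    Thm Sg Pi G p q -> SubstMor Sg D G ts ->
    Form Sg Pi D (fsubst D G ts p) -> Form Sg Pi D (fsubst D G ts q) ->
    Thm Sg Pi D (fsubst D G ts p) (fsubst D G ts q).

(* Terms are presented fibrewise: Tm Gamma is the class of all terms in
   context Gamma, each carrying its type (tmty); Tm(Gamma, A) is
   {a : Tm Gamma | tmty a = A}. *)
Record Cwf := {
  Ob : Type;
  Hom : Ob -> Ob -> Type;
  cid : forall X, Hom X X;
  comp : forall {X Y Z}, Hom Y Z -> Hom X Y -> Hom X Z;
  comp_assoc : forall W X Y Z (f : Hom Y Z) (g : Hom X Y) (h : Hom W X),
    comp f (comp g h) = comp (comp f g) h;
  comp_id_l : forall X Y (f : Hom X Y), comp (cid Y) f = f;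
  comp_id_r : forall X Y (f : Hom X Y), comp f (cid X) = f;
  has_terminal : exists T : Ob, forall X, exists f : Hom X T, forall g, g = f;
  Ty : Ob -> Type;
  tsub : forall {D G}, Ty G -> Hom D G -> Ty D;
  tsub_id : forall G (A : Ty G), tsub A (cid G) = A;
  tsub_comp : forall E D G (A : Ty G) (f : Hom D G) (g : Hom E D),
    tsub A (comp f g) = tsub (tsub A f) g;
  Tm : Ob -> Type;
  tmty : forall {G}, Tm G -> Ty G;
  msub : forall {D G}, Tm G -> Hom D G -> Tm D;
  msub_ty : forall D G (a : Tm G) (f : Hom D G), tmty (msub a f) = tsub (tmty a) f;
  msub_id : forall G (a : Tm G), msub a (cid G) = a;
  msub_comp : forall E D G (a : Tm G) (f : Hom D G) (g : Hom E D),
    msub a (comp f g) = msub (msub a f) g;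
  ext : forall G, Ty G -> Ob;
  pp : forall {G} (A : Ty G), Hom (ext G A) G;
  vv : forall {G} (A : Ty G), Tm (ext G A);
  vv_ty : forall G (A : Ty G), tmty (vv A) = tsub A (pp A);
  pair : forall {D G} (A : Ty G) (f : Hom D G) (a : Tm D),
    tmty a = tsub A f -> Hom D (ext G A);
  pair_p : forall D G (A : Ty G) f a H, comp (pp A) (@pair D G A f a H) = f;
  pair_v : forall D G (A : Ty G) f a H, msub (vv A) (@pair D G A f a H) = a;
  pair_eta : forall D G (A : Ty G) (h : Hom D (ext G A)) H,
    pair A (comp (pp A) h) (msub (vv A) h) H = h;
  pair_comp : forall E D G (A : Ty G) f a H (g : Hom E D) H',
    comp (@pair D G A f a H) g = pair A (comp f g) (msub a g) H'
}.

Arguments cid {c} X.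
Arguments ext {c} G A.

Definition IsTerminal (C : Cwf) (T : Ob C) : Prop :=
  forall X : Ob C, exists f : Hom C X T, forall g, g = f.

Definition qmor (C : Cwf) (D G : Ob C) (f : Hom C D G) (A : Ty C G)
  : Hom C (ext D (tsub C A f)) (ext G A) :=
  pair C A (comp C f (pp C (tsub C A f))) (vv C (tsub C A f))
    (eq_trans (vv_ty C _ (tsub C A f)) (eq_sym (tsub_comp C _ _ _ A f (pp C (tsub C A f))))).

Arguments qmor C {D G} f A.

Record HPA := {
  hcar : Type;
  hle : hcar -> hcar -> Prop;
  hle_refl : forall x, hle x x;
  hle_trans : forall x y z, hle x y -> hle y z -> hle x z;
  htop : hcar;
  hbot : hcar;
  hmeet : hcar -> hcar -> hcar;
  hjoin : hcar -> hcar -> hcar;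
  himp : hcar -> hcar -> hcar;
  hbot_le : forall x, hle hbot x;
  hle_top : forall x, hle x htop;
  hmeet_spec : forall x y z, hle z (hmeet x y) <-> hle z x /\ hle z y;
  hjoin_spec : forall x y z, hle (hjoin x y) z <-> hle x z /\ hle y z;
  himp_spec : forall x y z, hle z (himp x y) <-> hle (hmeet z x) y
}.

Definition IsHMor (A B : HPA) (h : hcar A -> hcar B) : Prop :=
  (forall x y, hle A x y -> hle B (h x) (h y)) /\
  h (htop A) = htop B /\ h (hbot A) = hbot B /\
  (forall x y, h (hmeet A x y) = hmeet B (h x) (h y)) /\
  (forall x y, h (hjoin A x y) = hjoin B (h x) (h y)) /\
  (forall x y, h (himp A x y) = himp B (h x) (h y)).

Record Hyperdoctrine (C : Cwf) := {
  Pr : Ob C -> HPA;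
  prsub : forall {D G : Ob C}, Hom C D G -> hcar (Pr G) -> hcar (Pr D);
  prsub_id : forall G R, prsub (cid G) R = R;
  prsub_comp : forall E D G (f : Hom C D G) (g : Hom C E D) R,
    prsub (comp C f g) R = prsub g (prsub f R);
  prsub_hmor : forall D G (f : Hom C D G), IsHMor (Pr G) (Pr D) (prsub f);
  hall : forall {G} (S : Ty C G), hcar (Pr (ext G S)) -> hcar (Pr G);
  hex : forall {G} (S : Ty C G), hcar (Pr (ext G S)) -> hcar (Pr G);
  hall_mono : forall G S R R', hle (Pr (ext G S)) R R' -> hle (Pr G) (hall S R) (hall S R');
  hex_mono : forall G S R R', hle (Pr (ext G S)) R R' -> hle (Pr G) (hex S R) (hex S R');
  hall_adj : forall G (S : Ty C G) Q R,
    hle (Pr G) Q (hall S R) <-> hle (Pr (ext G S)) (prsub (pp C S) Q) R;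
  hex_adj : forall G (S : Ty C G) Q R,
    hle (Pr G) (hex S R) Q <-> hle (Pr (ext G S)) R (prsub (pp C S) Q);
  hall_bc : forall D G (f : Hom C D G) (S : Ty C G) R,
    prsub f (hall S R) = hall (tsub C S f) (prsub (qmor C f S) R);
  hex_bc : forall D G (f : Hom C D G) (S : Ty C G) R,
    prsub f (hex S R) = hex (tsub C S f) (prsub (qmor C f S) R)
}.
Arguments Pr {C} h _.
Arguments prsub {C} h {D G} _ _.
Arguments hall {C} h {G} S _.
Arguments hex {C} h {G} S _.


Definition CtxO {L : Lang} (Sg : Sig L) := { G : ctx L | IsCtx Sg G }.
Definition HomS {L : Lang} (Sg : Sig L) (D G : CtxO Sg) :=
  { ts : list (term L) | SubstMor Sg (proj1_sig D) (proj1_sig G) ts }.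
Definition TyS {L : Lang} (Sg : Sig L) (G : CtxO Sg) :=
  { A : pretype L | IsType Sg (proj1_sig G) A }.
Definition TmS {L : Lang} (Sg : Sig L) (G : CtxO Sg) :=
  { Aa : pretype L * term L |
    IsType Sg (proj1_sig G) (fst Aa) /\ HasType Sg (proj1_sig G) (snd Aa) (fst Aa) }.

Definition tmtyS {L : Lang} {Sg : Sig L} {G : CtxO Sg} (t : TmS Sg G) : TyS Sg G :=
  exist _ (fst (proj1_sig t)) (proj1 (proj2_sig t)).

Definition emptyS {L : Lang} (Sg : Sig L) : CtxO Sg := exist _ [] (R1 Sg).

Definition extS {L : Lang} {Sg : Sig L} (G : CtxO Sg) (A : TyS Sg G) : CtxO Sg :=
  exist _ (proj1_sig G ++ [(fresh (proj1_sig G), proj1_sig A)])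
    (R2 Sg _ _ _ (proj2_sig G) (proj2_sig A) (fr_phi (LV L) (cvars (proj1_sig G)))).

Definition compS {L : Lang} {Sg : Sig L} {E D G : CtxO Sg}
  (m1 : HomS Sg D G) (m2 : HomS Sg E D) : list (term L) :=
  map (tsubst (OV (proj1_sig D)) (proj1_sig m2)) (proj1_sig m1).

Definition castDom (C : Cwf) (X Y Z : Ob C) (e : X = Y) (h : Hom C X Z) : Hom C Y Z :=
  match e in _ = W return Hom C W Z with eq_refl => h end.
Definition castCod (C : Cwf) (X Y Z : Ob C) (e : Y = Z) (h : Hom C X Y) : Hom C X Z :=
  match e in _ = W return Hom C X W with eq_refl => h end.
Definition castTm (C : Cwf) (X Y : Ob C) (e : X = Y) (a : Tm C X) : Tm C Y :=
  match e in _ = W return Tm C W with eq_refl => a end.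
Definition castPr (C : Cwf) (H : Hyperdoctrine C) (X Y : Ob C) (e : X = Y)
  (R : hcar (Pr H X)) : hcar (Pr H Y) :=
  match e in _ = W return hcar (Pr H W) with eq_refl => R end.
Arguments castDom {C X Y Z} e h.
Arguments castCod {C X Y Z} e h.
Arguments castTm {C X Y} e a.
Arguments castPr {C} H {X Y} e R.

Record CwfMorFS {L : Lang} (Sg : Sig L) (C : Cwf) := {
  Fob : CtxO Sg -> Ob C;
  Fmor : forall D G : CtxO Sg, HomS Sg D G -> Hom C (Fob D) (Fob G);
  Fsig : forall G : CtxO Sg, TyS Sg G -> Ty C (Fob G);
  Fth : forall G : CtxO Sg, TmS Sg G -> Tm C (Fob G);
  F_id : forall (G : CtxO Sg)
    (h : SubstMor Sg (proj1_sig G) (proj1_sig G) (map tvar (OV (proj1_sig G)))),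
    Fmor G G (exist _ _ h) = cid (Fob G);
  F_comp : forall (E D G : CtxO Sg) (m1 : HomS Sg D G) (m2 : HomS Sg E D)
    (h : SubstMor Sg (proj1_sig E) (proj1_sig G) (compS m1 m2)),
    Fmor E G (exist _ _ h) = comp C (Fmor D G m1) (Fmor E D m2);
  F_term : IsTerminal C (Fob (emptyS Sg));
  Fsig_sub : forall (D G : CtxO Sg) (m : HomS Sg D G) (A : TyS Sg G)
    (h : IsType Sg (proj1_sig D)
           (ysubst (OV (proj1_sig G)) (proj1_sig m) (proj1_sig A))),
    Fsig D (exist _ _ h) = tsub C (Fsig G A) (Fmor D G m);
  F_ext : forall (G : CtxO Sg) (A : TyS Sg G),
    Fob (extS G A) = ext (Fob G) (Fsig G A);
  F_p : forall (G : CtxO Sg) (A : TyS Sg G)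
    (h : SubstMor Sg (proj1_sig (extS G A)) (proj1_sig G) (map tvar (OV (proj1_sig G)))),
    castDom (F_ext G A) (Fmor (extS G A) G (exist _ _ h)) = pp C (Fsig G A);
  Fth_ty : forall (G : CtxO Sg) (t : TmS Sg G), tmty C (Fth G t) = Fsig G (tmtyS t);
  Fth_sub : forall (D G : CtxO Sg) (m : HomS Sg D G) (t : TmS Sg G)
    (h : IsType Sg (proj1_sig D)
           (fst (ysubst (OV (proj1_sig G)) (proj1_sig m) (fst (proj1_sig t)),
                 tsubst (OV (proj1_sig G)) (proj1_sig m) (snd (proj1_sig t)))) /\
         HasType Sg (proj1_sig D)
           (snd (ysubst (OV (proj1_sig G)) (proj1_sig m) (fst (proj1_sig t)),
                 tsubst (OV (proj1_sig G)) (proj1_sig m) (snd (proj1_sig t))))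
           (fst (ysubst (OV (proj1_sig G)) (proj1_sig m) (fst (proj1_sig t)),
                 tsubst (OV (proj1_sig G)) (proj1_sig m) (snd (proj1_sig t))))),
    Fth D (exist _ (ysubst (OV (proj1_sig G)) (proj1_sig m) (fst (proj1_sig t)),
                    tsubst (OV (proj1_sig G)) (proj1_sig m) (snd (proj1_sig t))) h)
    = msub C (Fth G t) (Fmor D G m);
  Fth_v : forall (G : CtxO Sg) (A : TyS Sg G)
    (h : IsType Sg (proj1_sig (extS G A)) (fst (proj1_sig A, tvar (fresh (proj1_sig G)))) /\
         HasType Sg (proj1_sig (extS G A))
           (snd (proj1_sig A, tvar (fresh (proj1_sig G))))
           (fst (proj1_sig A, tvar (fresh (proj1_sig G))))),
    castTm (F_ext G A) (Fth (extS G A) (exist _ (proj1_sig A, tvar (fresh (proj1_sig G))) h))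
    = vv C (Fsig G A);
  F_pair : forall (D G : CtxO Sg) (A : TyS Sg G) (m : HomS Sg D G) (b : term L)
    (hb : IsType Sg (proj1_sig D)
            (fst (ysubst (OV (proj1_sig G)) (proj1_sig m) (proj1_sig A), b)) /\
          HasType Sg (proj1_sig D)
            (snd (ysubst (OV (proj1_sig G)) (proj1_sig m) (proj1_sig A), b))
            (fst (ysubst (OV (proj1_sig G)) (proj1_sig m) (proj1_sig A), b)))
    (h : SubstMor Sg (proj1_sig D) (proj1_sig (extS G A)) (proj1_sig m ++ [b]))
    (H : tmty C (Fth D (exist _ (ysubst (OV (proj1_sig G)) (proj1_sig m) (proj1_sig A), b) hb))
         = tsub C (Fsig G A) (Fmor D G m)),
    castCod (F_ext G A) (Fmor D (extS G A) (exist _ _ h))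
    = pair C (Fsig G A) (Fmor D G m)
        (Fth D (exist _ (ysubst (OV (proj1_sig G)) (proj1_sig m) (proj1_sig A), b) hb)) H
}.

Arguments Fob {L Sg C} c _.
Arguments Fmor {L Sg C} c {D G} _.
Arguments Fsig {L Sg C} c {G} _.
Arguments F_ext {L Sg C} c G A.

(** * The Lindenbaum–Tarski hyperdoctrine H_{Sigma,Pi,emptyset} (fibres and
      quantifiers); its reindexing is phi |-> phi{(Delta,Gamma,abar)} = fsubst *)

Definition PrS {L : Lang} (Sg : Sig L) (Pi : PSig L) (G : CtxO Sg) :=
  { p : form L | Form Sg Pi (proj1_sig G) p }.

Definition PrLT {L : Lang} (Sg : Sig L) (Pi : PSig L) (G : CtxO Sg) : HPA.
Proof.
  refine {|
    hcar := PrS Sg Pi G;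
    hle := fun x y => Thm Sg Pi (proj1_sig G) (proj1_sig x) (proj1_sig y);
    htop := exist _ ftop (Fm_top Sg Pi _ (proj2_sig G));
    hbot := exist _ fbot (Fm_bot Sg Pi _ (proj2_sig G));
    hmeet := fun x y => exist _ (fand (proj1_sig x) (proj1_sig y))
                          (Fm_and Sg Pi _ _ _ (proj2_sig x) (proj2_sig y));
    hjoin := fun x y => exist _ (forr (proj1_sig x) (proj1_sig y))
                          (Fm_or Sg Pi _ _ _ (proj2_sig x) (proj2_sig y));
    himp := fun x y => exist _ (fimp (proj1_sig x) (proj1_sig y))
                          (Fm_imp Sg Pi _ _ _ (proj2_sig x) (proj2_sig y)) |}.
  - intros [x hx]; apply T_id; exact hx.
  - intros x y z; apply T_cut.
  - intros [x hx]; apply T_bot; exact hx.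
  - intros [x hx]; apply T_top; exact hx.
  - intros [x hx] [y hy] [z hz]; simpl; split.
    + intro H; split; eapply T_cut; try exact H.
      * apply T_andE1; assumption.
      * apply T_andE2; assumption.
    + intros [H1 H2]; apply T_andI; assumption.
  - intros [x hx] [y hy] [z hz]; simpl; split.
    + intro H; split; eapply T_cut; try exact H.
      * apply T_orI1; assumption.
      * apply T_orI2; assumption.
    + intros [H1 H2]; apply T_orE; assumption.
  - intros [x hx] [y hy] [z hz]; simpl; split.
    + apply T_impE.
    + apply T_impI.
Defined.

Definition allS {L : Lang} {Sg : Sig L} {Pi : PSig L} (G : CtxO Sg) (A : TyS Sg G)
  (R : PrS Sg Pi (extS G A)) : PrS Sg Pi G :=
  exist _ (fall (fresh (proj1_sig G)) (proj1_sig A) (proj1_sig R))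
    (Fm_all Sg Pi _ _ _ _ (proj2_sig A) (proj2_sig R)).
Definition exS {L : Lang} {Sg : Sig L} {Pi : PSig L} (G : CtxO Sg) (A : TyS Sg G)
  (R : PrS Sg Pi (extS G A)) : PrS Sg Pi G :=
  exist _ (fex (fresh (proj1_sig G)) (proj1_sig A) (proj1_sig R))
    (Fm_ex Sg Pi _ _ _ _ (proj2_sig A) (proj2_sig R)).

Definition FBasedMor {L : Lang} {Sg : Sig L} {Pi : PSig L} {C : Cwf}
  (F : CwfMorFS Sg C) (Dh : Hyperdoctrine C)
  (Gm : forall G : CtxO Sg, PrS Sg Pi G -> hcar (Pr Dh (Fob F G))) : Prop :=
  (forall G : CtxO Sg, IsHMor (PrLT Sg Pi G) (Pr Dh (Fob F G)) (Gm G)) /\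
  (forall (D G : CtxO Sg) (m : HomS Sg D G) (R : PrS Sg Pi G)
     (h : Form Sg Pi (proj1_sig D)
            (fsubst (proj1_sig D) (proj1_sig G) (proj1_sig m) (proj1_sig R))),
     Gm D (exist _ _ h) = prsub Dh (Fmor F m) (Gm G R)) /\
  (forall (G : CtxO Sg) (S : TyS Sg G) (R : PrS Sg Pi (extS G S)),
     Gm G (allS G S R) = hall Dh (Fsig F S) (castPr Dh (F_ext F G S) (Gm (extS G S) R))) /\
  (forall (G : CtxO Sg) (S : TyS Sg G) (R : PrS Sg Pi (extS G S)),
     Gm G (exS G S R) = hex Dh (Fsig F S) (castPr Dh (F_ext F G S) (Gm (extS G S) R))).

Definition InterpretsPreds {L : Lang} {Sg : Sig L} {Pi : PSig L} {C : Cwf}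
  (F : CwfMorFS Sg C) (Dh : Hyperdoctrine C) (hPi : IsPredSig Sg Pi)
  (Rstar : forall (R : LP L) (G : ctx L) (e : Pi R = Some G),
             hcar (Pr Dh (Fob F (exist _ G (hPi R G e)))))
  (Gm : forall G : CtxO Sg, PrS Sg Pi G -> hcar (Pr Dh (Fob F G))) : Prop :=
  forall (R : LP L) (G : ctx L) (e : Pi R = Some G)
    (h : Form Sg Pi G (fatom R (map tvar (OV G)))),
    Gm (exist _ G (hPi R G e)) (exist _ _ h) = Rstar R G e.

(* Main.v *)
Require Import Defs.
From Stdlib Require Import List Arith Lia ProofIrrelevance.
Import ListNotations.

Section Syn.
Context {L : Lang}.

Lemma lookup_id (xs : list (V L)) y : lookup xs (map tvar xs) y = tvar y.
Proof.
  induction xs as [|a xs IH]; simpl; auto.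
  destruct (var_eq_dec (LV L) a y); subst; auto.
Qed.

Fixpoint tsubst_id (xs : list (V L)) (e : term L) {struct e} :
  tsubst xs (map tvar xs) e = e :=
  match e with
  | tvar y => lookup_id xs y
  | tapp f args => f_equal (tapp f)
      ((fix go (l : list (term L)) : map (tsubst xs (map tvar xs)) l = l :=
          match l with
          | [] => eq_refl
          | a :: l' => f_equal2 cons (tsubst_id xs a) (go l')
          end) args)
  end.

Lemma map_tsubst_id (xs : list (V L)) l : map (tsubst xs (map tvar xs)) l = l.
Proof. induction l; simpl; f_equal; auto using tsubst_id. Qed.

Lemma ysubst_id (xs : list (V L)) A : ysubst xs (map tvar xs) A = A.
Proof. destruct A; simpl; f_equal; apply map_tsubst_id. Qed.

Lemma OV_app (G1 G2 : ctx L) : OV (G1 ++ G2) = OV G1 ++ OV G2.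
Proof. unfold OV; apply map_app. Qed.

Lemma OV_length (G : ctx L) : length (OV G) = length G.
Proof. unfold OV; apply length_map. Qed.

Lemma OV_cvars (G : ctx L) x : In x (OV G) -> In x (cvars G).
Proof.
  induction G as [|[y A] G IH]; simpl; auto.
  intros [H|H]; [left; auto| right; apply in_or_app; right; auto].
Qed.

Lemma NoDup_snoc (l : list (V L)) x : NoDup l -> ~ In x l -> NoDup (l ++ [x]).
Proof.
  induction l as [|a l IH]; simpl; intros H Hn.
  - constructor; auto.
  - inversion H; subst. constructor.
    + intro Hin; apply in_app_or in Hin; destruct Hin as [Hin|[Hin|[]]]; auto.
    + apply IH; auto.
Qed.

Lemma lookup_nodup (xs : list (V L)) ts :
  NoDup xs -> length ts = length xs -> map (lookup xs ts) xs = ts.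
Proof.
  revert ts; induction xs as [|a xs IH]; intros [|t ts] Hn Hl; simpl in *; try discriminate; auto.
  inversion Hn; subst.
  destruct (var_eq_dec (LV L) a a) as [_|n]; [|congruence].
  f_equal. transitivity (map (lookup xs ts) xs); [|apply IH; auto].
  apply map_ext_in. intros y Hy.
  destruct (var_eq_dec (LV L) a y); subst; [contradiction|auto].
Qed.

Lemma nth_error_snoc {T} (l : list T) v k w :
  nth_error l k = Some w -> nth_error (l ++ [v]) k = Some w.
Proof.
  intro H. rewrite nth_error_app1; auto. apply nth_error_Some; congruence.
Qed.
End Syn.

Section Jdg.
Context {L : Lang} (Sg : Sig L).

Lemma IsCtx_snoc_inv (G : ctx L) x A :
  IsCtx Sg (G ++ [(x, A)]) -> IsCtx Sg G /\ IsType Sg G A /\ phi (LV L) (cvars G) x.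
Proof.
  intro H; inversion H.
  - destruct G; discriminate.
  - apply app_inj_tail in H0. destruct H0 as [-> He]. inversion He; subst; auto.
Qed.

Lemma IsCtx_nodup (G : ctx L) : IsCtx Sg G -> NoDup (OV G).
Proof.
  induction 1.
  - constructor.
  - rewrite OV_app. simpl. apply NoDup_snoc; auto.
    intro Hin. apply OV_cvars in Hin. eapply phi_fresh; eauto.
Qed.

Scheme IsType_mut := Induction for IsType Sort Prop
  with HasType_mut := Induction for HasType Sort Prop.

Definition Ext (D D' : ctx L) := forall k v, nth_error D k = Some v -> nth_error D' k = Some v.

Lemma weaken_both :
  (forall D A, IsType Sg D A -> forall D', IsCtx Sg D' -> Ext D D' -> IsType Sg D' A) /\
  (forall D t A, HasType Sg D t A -> forall D', IsCtx Sg D' -> Ext D D' -> HasType Sg D' t A).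
Proof.
  split.
  - apply (IsType_mut L Sg
      (fun D A _ => forall D', IsCtx Sg D' -> Ext D D' -> IsType Sg D' A)
      (fun D t A _ => forall D', IsCtx Sg D' -> Ext D D' -> HasType Sg D' t A)).
    + intros. eapply R4; eauto.
    + intros. eapply R3; eauto.
    + intros. eapply R5; eauto.
  - apply (HasType_mut L Sg
      (fun D A _ => forall D', IsCtx Sg D' -> Ext D D' -> IsType Sg D' A)
      (fun D t A _ => forall D', IsCtx Sg D' -> Ext D D' -> HasType Sg D' t A)).
    + intros. eapply R4; eauto.
    + intros. eapply R3; eauto.
    + intros. eapply R5; eauto.
Qed.

Lemma Ext_snoc (D : ctx L) v : Ext D (D ++ [v]).
Proof. intros k w H; apply nth_error_snoc; auto. Qed.

Lemma weakT D v A : IsType Sg D A -> IsCtx Sg (D ++ [v]) -> IsType Sg (D ++ [v]) A.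
Proof. intros; eapply (proj1 weaken_both); eauto using Ext_snoc. Qed.
Lemma weakH D v t A : HasType Sg D t A -> IsCtx Sg (D ++ [v]) -> HasType Sg (D ++ [v]) t A.
Proof. intros; eapply (proj2 weaken_both); eauto using Ext_snoc. Qed.

Lemma SubstMor_id (G : ctx L) : IsCtx Sg G -> SubstMor Sg G G (map tvar (OV G)).
Proof.
  intro HG. repeat split; auto.
  - rewrite length_map; apply OV_length.
  - intros k x A t Hk Ht.
    rewrite firstn_map, ysubst_id.
    rewrite nth_error_map in Ht. unfold OV in Ht. rewrite nth_error_map, Hk in Ht.
    simpl in Ht. inversion Ht; subst. eapply R3; eauto.
Qed.

Lemma SubstMor_weak D G ts v :
  SubstMor Sg D G ts -> IsCtx Sg (D ++ [v]) -> SubstMor Sg (D ++ [v]) G ts.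
Proof.
  intros (HD & HG & Hl & Hk) HD'. repeat split; auto.
  intros; eapply weakH; eauto.
Qed.

Lemma SubstMor_ext D G ts x A y :
  SubstMor Sg D G ts -> IsCtx Sg (G ++ [(x, A)]) ->
  IsCtx Sg (D ++ [(y, ysubst (OV G) ts A)]) ->
  SubstMor Sg (D ++ [(y, ysubst (OV G) ts A)]) (G ++ [(x, A)]) (ts ++ [tvar y]).
Proof.
  intros (HD & HG & Hl & Hk) HG' HD'. repeat split; auto.
  - rewrite !length_app; simpl; lia.
  - intros k z B t Hz Ht.
    destruct (Nat.lt_ge_cases k (length G)) as [Hlt|Hge].
    + rewrite nth_error_app1 in Hz by auto.
      rewrite nth_error_app1 in Ht by lia.
      rewrite OV_app, !firstn_app, OV_length.
      replace (k - length G) with 0 by lia.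
      replace (k - length ts) with 0 by lia. simpl. rewrite !app_nil_r.
      eapply weakH; eauto.
    + rewrite nth_error_app2 in Hz by auto.
      rewrite nth_error_app2 in Ht by lia.
      destruct (k - length G) as [|j] eqn:Ej.
      2:{ simpl in Hz; destruct j; discriminate. }
      replace (k - length ts) with 0 in Ht by lia.
      simpl in Hz, Ht. inversion Hz; inversion Ht; subst.
      assert (k = length G) by lia. subst k.
      rewrite OV_app, firstn_app, OV_length, Nat.sub_diag, firstn_all2 by (rewrite OV_length; lia).
      rewrite firstn_app, Hl, Nat.sub_diag, (firstn_all2 ts) by lia. simpl. rewrite !app_nil_r.
      eapply R3 with (k := length D); auto.
      rewrite nth_error_app2, Nat.sub_diag by lia. reflexivity.
Qed.
End Jdg.

Section Frm.
Context {L : Lang} (hdB : deBruijn (LV L)) (Sg : Sig L) (Pi : PSig L).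

Lemma FormCtx G p : Form Sg Pi G p -> IsCtx Sg G.
Proof.
  induction 1; auto.
  - destruct H0; auto.
  - apply IsCtx_snoc_inv in IHForm; tauto.
  - apply IsCtx_snoc_inv in IHForm; tauto.
Qed.

Lemma snoc_fresh G x A : IsCtx Sg (G ++ [(x, A)]) -> x = fresh G.
Proof. intro H. apply IsCtx_snoc_inv in H. apply hdB; tauto. Qed.

Lemma inv_and1 G p q : Form Sg Pi G (fand p q) -> Form Sg Pi G p.
Proof. inversion 1; auto. Qed.
Lemma inv_and2 G p q : Form Sg Pi G (fand p q) -> Form Sg Pi G q.
Proof. inversion 1; auto. Qed.
Lemma inv_or1 G p q : Form Sg Pi G (forr p q) -> Form Sg Pi G p.
Proof. inversion 1; auto. Qed.
Lemma inv_or2 G p q : Form Sg Pi G (forr p q) -> Form Sg Pi G q.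
Proof. inversion 1; auto. Qed.
Lemma inv_imp1 G p q : Form Sg Pi G (fimp p q) -> Form Sg Pi G p.
Proof. inversion 1; auto. Qed.
Lemma inv_imp2 G p q : Form Sg Pi G (fimp p q) -> Form Sg Pi G q.
Proof. inversion 1; auto. Qed.
Lemma inv_allT G x A q : Form Sg Pi G (fall x A q) -> IsType Sg G A.
Proof. inversion 1; auto. Qed.
Lemma inv_allX G x A q : Form Sg Pi G (fall x A q) -> x = fresh G.
Proof. inversion 1; subst. apply FormCtx in H5. eapply snoc_fresh; eauto. Qed.
Lemma inv_allF G x A q : Form Sg Pi G (fall x A q) -> Form Sg Pi (G ++ [(fresh G, A)]) q.
Proof. intro H. pose proof (inv_allX _ _ _ _ H). subst. inversion H; auto. Qed.
Lemma inv_exT G x A q : Form Sg Pi G (fex x A q) -> IsType Sg G A.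
Proof. inversion 1; auto. Qed.
Lemma inv_exX G x A q : Form Sg Pi G (fex x A q) -> x = fresh G.
Proof. inversion 1; subst. apply FormCtx in H5. eapply snoc_fresh; eauto. Qed.
Lemma inv_exF G x A q : Form Sg Pi G (fex x A q) -> Form Sg Pi (G ++ [(fresh G, A)]) q.
Proof. intro H. pose proof (inv_exX _ _ _ _ H). subst. inversion H; auto. Qed.
Lemma inv_atom D R ts G : Form Sg Pi D (fatom R ts) -> Pi R = Some G -> SubstMor Sg D G ts.
Proof. intros H e. inversion H as [R0 G0 D0 ts0 e0 Hs| | | | | | |]; subst. rewrite e in e0. inversion e0; subst; auto. Qed.
Lemma inv_atom_none D R ts : Form Sg Pi D (fatom R ts) -> Pi R = None -> False.
Proof. inversion 1; subst. congruence. Qed.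

Lemma ThmForm G p q : Thm Sg Pi G p q -> Form Sg Pi G p /\ Form Sg Pi G q.
Proof.
  induction 1; try tauto;
  repeat match goal with h : _ /\ _ |- _ => destruct h end;
  try (split; auto; econstructor; eauto using FormCtx, inv_and1, inv_and2, inv_imp1, inv_imp2; fail).
  all: try (split; econstructor; eauto using FormCtx; fail).
  all: try (split; eauto using inv_and1, inv_imp2; constructor; eauto using inv_and2, inv_imp1; fail).
  all: idtac.
Qed.
End Frm.

Section Sem.
Context {L : Lang} (hdB : deBruijn (LV L)) (Sg : Sig L) (Pi : PSig L)
  (hPi : IsPredSig Sg Pi) (C : Cwf) (F : CwfMorFS Sg C) (Dh : Hyperdoctrine C)
  (Rstar : forall (R : LP L) (G : ctx L) (e : Pi R = Some G),
             hcar (Pr Dh (Fob F (exist _ G (hPi R G e))))).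

Definition atomI (G : CtxO Sg) R ts (H : Form Sg Pi (proj1_sig G) (fatom R ts))
  : hcar (Pr Dh (Fob F G)) :=
  match Pi R as o return Pi R = o -> hcar (Pr Dh (Fob F G)) with
  | Some G' => fun e =>
      prsub Dh (@Fmor _ _ _ F G (exist _ G' (hPi R G' e))
                   (exist _ ts (inv_atom Sg Pi _ _ _ _ H e))) (Rstar R G' e)
  | None => fun e => False_rect _ (inv_atom_none Sg Pi _ _ _ H e)
  end eq_refl.

Fixpoint interp (G : CtxO Sg) (p : form L) {struct p}
  : Form Sg Pi (proj1_sig G) p -> hcar (Pr Dh (Fob F G)) :=
  match p with
  | fatom R ts => fun H => atomI G R ts H
  | fbot => fun _ => hbot _
  | ftop => fun _ => htop _
  | fand p q => fun H => hmeet _ (interp G p (inv_and1 Sg Pi _ _ _ H)) (interp G q (inv_and2 Sg Pi _ _ _ H))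
  | forr p q => fun H => hjoin _ (interp G p (inv_or1 Sg Pi _ _ _ H)) (interp G q (inv_or2 Sg Pi _ _ _ H))
  | fimp p q => fun H => himp _ (interp G p (inv_imp1 Sg Pi _ _ _ H)) (interp G q (inv_imp2 Sg Pi _ _ _ H))
  | fall x A q => fun H =>
      let A' := exist _ A (inv_allT Sg Pi _ _ _ _ H) : TyS Sg G in
      hall Dh (Fsig F A') (castPr Dh (F_ext F G A')
        (interp (extS G A') q (inv_allF hdB Sg Pi _ _ _ _ H)))
  | fex x A q => fun H =>
      let A' := exist _ A (inv_exT Sg Pi _ _ _ _ H) : TyS Sg G in
      hex Dh (Fsig F A') (castPr Dh (F_ext F G A')
        (interp (extS G A') q (inv_exF hdB Sg Pi _ _ _ _ H)))
  end.


Lemma interp_pi G p H1 H2 : interp G p H1 = interp G p H2.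
Proof. rewrite (proof_irrelevance _ H1 H2); reflexivity. Qed.

Lemma Fmor_ext (D G : CtxO Sg) (m1 m2 : HomS Sg D G) :
  proj1_sig m1 = proj1_sig m2 -> Fmor F m1 = Fmor F m2.
Proof.
  destruct m1 as [a h1], m2 as [b h2]; simpl; intros ->.
  rewrite (proof_irrelevance _ h1 h2); reflexivity.
Qed.

Lemma Fsig_ext (G : CtxO Sg) (A1 A2 : TyS Sg G) :
  proj1_sig A1 = proj1_sig A2 -> Fsig F A1 = Fsig F A2.
Proof.
  destruct A1 as [a h1], A2 as [b h2]; simpl; intros ->.
  rewrite (proof_irrelevance _ h1 h2); reflexivity.
Qed.

Lemma atomI_eq (G : CtxO Sg) R ts H G' (e : Pi R = Some G') h :
  atomI G R ts H = prsub Dh (@Fmor _ _ _ F G (exist _ G' (hPi R G' e)) (exist _ ts h)) (Rstar R G' e).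
Proof.
  unfold atomI.
  assert (Hg : forall o (e0 : Pi R = o),
    match o as o0 return Pi R = o0 -> hcar (Pr Dh (Fob F G)) with
    | Some G' => fun e =>
        prsub Dh (@Fmor _ _ _ F G (exist _ G' (hPi R G' e))
                     (exist _ ts (inv_atom Sg Pi _ _ _ _ H e))) (Rstar R G' e)
    | None => fun e => False_rect _ (inv_atom_none Sg Pi _ _ _ H e)
    end e0 = prsub Dh (@Fmor _ _ _ F G (exist _ G' (hPi R G' e)) (exist _ ts h)) (Rstar R G' e)).
  { intros [G''|] e0.
    - assert (G'' = G') by congruence. subst G''.
      rewrite (proof_irrelevance _ e0 e).
      f_equal. apply Fmor_ext; reflexivity.
    - congruence. }
  apply Hg.
Qed.

Lemma interp_and G p q H H1 H2 :
  interp G (fand p q) H = hmeet _ (interp G p H1) (interp G q H2).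
Proof. simpl; f_equal; apply interp_pi. Qed.
Lemma interp_or G p q H H1 H2 :
  interp G (forr p q) H = hjoin _ (interp G p H1) (interp G q H2).
Proof. simpl; f_equal; apply interp_pi. Qed.
Lemma interp_imp G p q H H1 H2 :
  interp G (fimp p q) H = himp _ (interp G p H1) (interp G q H2).
Proof. simpl; f_equal; apply interp_pi. Qed.

Lemma interp_all G A q (H : Form Sg Pi (proj1_sig G) (fall (fresh (proj1_sig G)) A q)) hA
  (Hq : Form Sg Pi (proj1_sig (extS G (exist _ A hA))) q) :
  interp G (fall (fresh (proj1_sig G)) A q) H =
  hall Dh (Fsig F (exist _ A hA)) (castPr Dh (F_ext F G (exist _ A hA))
        (interp (extS G (exist _ A hA)) q Hq)).
Proof.
  simpl. generalize (inv_allT Sg Pi _ _ _ _ H) (inv_allF hdB Sg Pi _ _ _ _ H).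
  intros h1 h2. rewrite (proof_irrelevance _ h1 hA).
  f_equal. f_equal. apply interp_pi.
Qed.
Lemma interp_ex G A q (H : Form Sg Pi (proj1_sig G) (fex (fresh (proj1_sig G)) A q)) hA
  (Hq : Form Sg Pi (proj1_sig (extS G (exist _ A hA))) q) :
  interp G (fex (fresh (proj1_sig G)) A q) H =
  hex Dh (Fsig F (exist _ A hA)) (castPr Dh (F_ext F G (exist _ A hA))
        (interp (extS G (exist _ A hA)) q Hq)).
Proof.
  simpl. generalize (inv_exT Sg Pi _ _ _ _ H) (inv_exF hdB Sg Pi _ _ _ _ H).
  intros h1 h2. rewrite (proof_irrelevance _ h1 hA).
  f_equal. f_equal. apply interp_pi.
Qed.

End Sem.

Section Abs.
Context (C : Cwf) (Dh : Hyperdoctrine C).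

Lemma castPr_prsub (X X' Y : Ob C) (e : X = X') (g : Hom C X Y) R :
  castPr Dh e (prsub Dh g R) = prsub Dh (castDom e g) R.
Proof. destruct e; reflexivity. Qed.

Lemma castPr_mono (X X' : Ob C) (e : X = X') a b :
  hle _ a b -> hle _ (castPr Dh e a) (castPr Dh e b).
Proof. destruct e; auto. Qed.

Lemma castDom_comp (X X' Y Z : Ob C) (e : X = X') (f : Hom C Y Z) (g : Hom C X Y) :
  castDom e (comp C f g) = comp C f (castDom e g).
Proof. destruct e; reflexivity. Qed.

Lemma castDom_pair (X X' G : Ob C) (e : X = X') (A : Ty C G) f a H :
  exists H', castDom e (pair C A f a H) = pair C A (castDom e f) (castTm e a) H'.
Proof. destruct e; exists H; reflexivity. Qed.

Lemma pair_ext (D G : Ob C) (A : Ty C G) f1 f2 a1 a2 H1 H2 :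
  f1 = f2 -> a1 = a2 -> @pair C D G A f1 a1 H1 = pair C A f2 a2 H2.
Proof. intros -> ->. f_equal. apply proof_irrelevance. Qed.

Lemma key_quant (Q : forall G (S : Ty C G), hcar (Pr Dh (ext G S)) -> hcar (Pr Dh G))
  (D0 G0 : Ob C) (f : Hom C D0 G0) (A : Ty C G0) (B : Ty C D0) (eB : B = tsub C A f)
  (XD XG : Ob C) (eD : XD = ext D0 B) (eG : XG = ext G0 A) (g : Hom C XD XG)
  (HK : forall H0, castDom eD (castCod eG g) = pair C A (comp C f (pp C B)) (vv C B) H0)
  (Y : hcar (Pr Dh XG)) :
  Q D0 B (castPr Dh eD (prsub Dh g Y)) =
  Q D0 (tsub C A f) (prsub Dh (qmor C f A) (castPr Dh eG Y)).
Proof.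
  subst XD XG. simpl in *. subst B. unfold qmor. erewrite HK. reflexivity.
Qed.
End Abs.

Section Sem2.
Context {L : Lang} (hdB : deBruijn (LV L)) (Sg : Sig L) (Pi : PSig L)
  (hPi : IsPredSig Sg Pi) (C : Cwf) (F : CwfMorFS Sg C) (Dh : Hyperdoctrine C).

Lemma subst_quant_core
  (Q : forall G (S : Ty C G), hcar (Pr Dh (ext G S)) -> hcar (Pr Dh G))
  (Qbc : forall D G (f : Hom C D G) S R,
     prsub Dh f (Q G S R) = Q D (tsub C S f) (prsub Dh (qmor C f S) R))
  (G D : CtxO Sg) (m : HomS Sg D G) (A : TyS Sg G) (B : TyS Sg D)
  (eBsyn : proj1_sig B = ysubst (OV (proj1_sig G)) (proj1_sig m) (proj1_sig A))
  (m' : HomS Sg (extS D B) (extS G A))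
  (em' : proj1_sig m' = proj1_sig m ++ [tvar (fresh (proj1_sig D))])
  (X : hcar (Pr Dh (Fob F (extS G A)))) :
  Q _ (Fsig F B) (castPr Dh (F_ext F D B) (prsub Dh (Fmor F m') X)) =
  prsub Dh (Fmor F m) (Q _ (Fsig F A) (castPr Dh (F_ext F G A) X)).
Proof.
  rewrite Qbc.
  destruct B as [B hB]; simpl in eBsyn; subst B.
  destruct m' as [l hm']; simpl in em'; subst l.
  apply key_quant.
  - apply Fsig_sub.
  - intro H0.
    pose proof (proj2_sig (extS D (exist _ _ hB))) as hDB.
    set (B' := exist _ _ hB : TyS Sg D) in *.
    set (mts := exist _ (proj1_sig m) (SubstMor_weak Sg _ _ _ _ (proj2_sig m) hDB)
           : HomS Sg (extS D B') G).
    assert (hb : IsType Sg (proj1_sig (extS D B')) (ysubst (OV (proj1_sig G)) (proj1_sig m) (proj1_sig A))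
             /\ HasType Sg (proj1_sig (extS D B')) (tvar (fresh (proj1_sig D)))
                  (ysubst (OV (proj1_sig G)) (proj1_sig m) (proj1_sig A))).
    { split.
      - apply weakT; auto.
      - eapply R3 with (k := length (proj1_sig D)); auto. simpl.
        rewrite nth_error_app2, Nat.sub_diag by lia. reflexivity. }
    assert (hcT : IsType Sg (proj1_sig (extS D B'))
                   (ysubst (OV (proj1_sig G)) (proj1_sig mts) (proj1_sig A))) by exact (proj1 hb).
    assert (H : tmty C (Fth Sg C F (extS D B')
                  (exist _ (ysubst (OV (proj1_sig G)) (proj1_sig m) (proj1_sig A),
                            tvar (fresh (proj1_sig D))) hb))
                = tsub C (Fsig F A) (Fmor F mts)).
    { rewrite Fth_ty. rewrite <- (Fsig_sub Sg C F _ _ mts A hcT). apply Fsig_ext. reflexivity. }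
    etransitivity; [apply (f_equal (castDom (F_ext F D B'))); exact (F_pair Sg C F (extS D B') G A mts (tvar (fresh (proj1_sig D))) hb hm' H)|].
    destruct (castDom_pair C _ _ _ (F_ext F D B') (Fsig F A) _ _ H) as [H' EH].
    etransitivity; [exact EH|].
    apply pair_ext.
    + pose proof (SubstMor_weak Sg _ _ _ _ (SubstMor_id Sg _ (proj2_sig D)) hDB) as hpD.
      set (pD := exist _ _ hpD : HomS Sg (extS D B') D).
      assert (hc : SubstMor Sg (proj1_sig (extS D B')) (proj1_sig G) (compS m pD)).
      { unfold compS. simpl. rewrite map_tsubst_id. exact (proj2_sig mts). }
      rewrite (Fmor_ext Sg C F _ _ mts (exist _ _ hc)).
      2:{ simpl. unfold compS. simpl. rewrite map_tsubst_id. reflexivity. }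
      rewrite (F_comp Sg C F _ _ _ m pD hc).
      rewrite castDom_comp. f_equal. apply (F_p Sg C F D B').
    + apply (Fth_v Sg C F D B').
Qed.
End Sem2.

Section Sub.
Context {L : Lang} (hdB : deBruijn (LV L)) (Sg : Sig L) (Pi : PSig L)
  (hPi : IsPredSig Sg Pi) (C : Cwf) (F : CwfMorFS Sg C) (Dh : Hyperdoctrine C)
  (Rstar : forall (R : LP L) (G : ctx L) (e : Pi R = Some G),
             hcar (Pr Dh (Fob F (exist _ G (hPi R G e))))).

Notation I := (interp hdB Sg Pi hPi C F Dh Rstar).

Lemma interp_subst : forall p (G D : CtxO Sg) (m : HomS Sg D G) Hp Hs,
  I D (fsubst (proj1_sig D) (proj1_sig G) (proj1_sig m) p) Hs =
  prsub Dh (Fmor F m) (I G p Hp).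
Proof.
  induction p as [R us| | |p1 IH1 p2 IH2|p1 IH1 p2 IH2|p1 IH1 p2 IH2|x A q IH|x A q IH];
    intros G D m Hp Hs;
    destruct (prsub_hmor C Dh _ _ (Fmor F m)) as (_&Htop&Hbot&Hm&Hj&Hi);
    cbn [fsubst] in *.
  - cbn [interp]. destruct (Pi R) as [G'|] eqn:e.
    2:{ exfalso; eapply inv_atom_none; eauto. }
    rewrite (atomI_eq Sg Pi hPi C F Dh Rstar G R us Hp G' e (inv_atom Sg Pi _ _ _ _ Hp e)).
    rewrite (atomI_eq Sg Pi hPi C F Dh Rstar D R _ Hs G' e (inv_atom Sg Pi _ _ _ _ Hs e)).
    rewrite <- prsub_comp. f_equal.
    pose proof (F_comp Sg C F D G (exist _ G' (hPi R G' e)) (exist _ us (inv_atom Sg Pi _ _ _ _ Hp e)) m (inv_atom Sg Pi _ _ _ _ Hs e)) as EC.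
    etransitivity; [|exact EC].
    apply Fmor_ext; reflexivity.
  - cbn [interp]; auto.
  - cbn [interp]; auto.
  - cbn [interp]; rewrite Hm; f_equal; auto.
  - cbn [interp]; rewrite Hj; f_equal; auto.
  - cbn [interp]; rewrite Hi; f_equal; auto.
  - pose proof (inv_allX hdB Sg Pi _ _ _ _ Hp) as ex; subst x.
    set (hA := inv_allT Sg Pi _ _ _ _ Hp). set (A' := exist _ A hA : TyS Sg G).
    set (hB := inv_allT Sg Pi _ _ _ _ Hs).
    set (B' := exist _ _ hB : TyS Sg D).
    pose proof (inv_allF hdB Sg Pi _ _ _ _ Hp) as HqG.
    pose proof (inv_allF hdB Sg Pi _ _ _ _ Hs) as Hq'.
    rewrite (interp_all hdB Sg Pi hPi C F Dh Rstar D _ _ Hs hB Hq').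
    rewrite (interp_all hdB Sg Pi hPi C F Dh Rstar G A q Hp hA HqG).
    set (m' := exist _ _ (SubstMor_ext Sg _ _ _ _ _ _ (proj2_sig m) (proj2_sig (extS G A')) (proj2_sig (extS D B')))
          : HomS Sg (extS D B') (extS G A')).
    pose proof (IH (extS G A') (extS D B') m' HqG Hq') as E.
    transitivity (hall Dh (Fsig F B') (castPr Dh (F_ext F D B') (prsub Dh (Fmor F m') (I (extS G A') q HqG)))).
    { do 2 f_equal. exact E. }
    apply (subst_quant_core Sg C F Dh (fun G S R => hall Dh S R) (hall_bc C Dh) G D m A' B' eq_refl m' eq_refl).
  - pose proof (inv_exX hdB Sg Pi _ _ _ _ Hp) as ex; subst x.
    set (hA := inv_exT Sg Pi _ _ _ _ Hp). set (A' := exist _ A hA : TyS Sg G).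
    set (hB := inv_exT Sg Pi _ _ _ _ Hs).
    set (B' := exist _ _ hB : TyS Sg D).
    pose proof (inv_exF hdB Sg Pi _ _ _ _ Hp) as HqG.
    pose proof (inv_exF hdB Sg Pi _ _ _ _ Hs) as Hq'.
    rewrite (interp_ex hdB Sg Pi hPi C F Dh Rstar D _ _ Hs hB Hq').
    rewrite (interp_ex hdB Sg Pi hPi C F Dh Rstar G A q Hp hA HqG).
    set (m' := exist _ _ (SubstMor_ext Sg _ _ _ _ _ _ (proj2_sig m) (proj2_sig (extS G A')) (proj2_sig (extS D B')))
          : HomS Sg (extS D B') (extS G A')).
    pose proof (IH (extS G A') (extS D B') m' HqG Hq') as E.
    transitivity (hex Dh (Fsig F B') (castPr Dh (F_ext F D B') (prsub Dh (Fmor F m') (I (extS G A') q HqG)))).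
    { do 2 f_equal. exact E. }
    apply (subst_quant_core Sg C F Dh (fun G S R => hex Dh S R) (hex_bc C Dh) G D m A' B' eq_refl m' eq_refl).
Qed.
End Sub.

Lemma castPr_mono_rev (C : Cwf) (Dh : Hyperdoctrine C) (X X' : Ob C) (e : X = X') a b :
  hle _ (castPr Dh e a) (castPr Dh e b) -> hle _ a b.
Proof. destruct e; auto. Qed.

Lemma hle_eq_l (H : HPA) x y z : x = y -> hle H y z -> hle H x z.
Proof. intros ->; auto. Qed.
Lemma hle_eq_r (H : HPA) x y z : y = z -> hle H x y -> hle H x z.
Proof. intros <-; auto. Qed.

Section Snd.
Context {L : Lang} (hdB : deBruijn (LV L)) (Sg : Sig L) (Pi : PSig L)
  (hPi : IsPredSig Sg Pi) (C : Cwf) (F : CwfMorFS Sg C) (Dh : Hyperdoctrine C)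
  (Rstar : forall (R : LP L) (G : ctx L) (e : Pi R = Some G),
             hcar (Pr Dh (Fob F (exist _ G (hPi R G e))))).

Notation I := (interp hdB Sg Pi hPi C F Dh Rstar).
Notation IA := (interp_and hdB Sg Pi hPi C F Dh Rstar).
Notation IO := (interp_or hdB Sg Pi hPi C F Dh Rstar).
Notation IM := (interp_imp hdB Sg Pi hPi C F Dh Rstar).
Notation IALL := (interp_all hdB Sg Pi hPi C F Dh Rstar).
Notation IEX := (interp_ex hdB Sg Pi hPi C F Dh Rstar).
Notation ISUB := (interp_subst hdB Sg Pi hPi C F Dh Rstar).

Definition projS (G : CtxO Sg) (A : TyS Sg G) : HomS Sg (extS G A) G :=
  exist _ _ (SubstMor_weak Sg _ _ _ _ (SubstMor_id Sg _ (proj2_sig G)) (proj2_sig (extS G A))).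

Lemma weak_eq (G : CtxO Sg) (A : TyS Sg G) p Hp Hw :
  castPr Dh (F_ext F G A) (I (extS G A) (pweak (proj1_sig G) (fresh (proj1_sig G)) (proj1_sig A) p) Hw)
  = prsub Dh (pp C (Fsig F A)) (I G p Hp).
Proof.
  assert (E1 : I (extS G A) (pweak (proj1_sig G) (fresh (proj1_sig G)) (proj1_sig A) p) Hw
               = prsub Dh (Fmor F (projS G A)) (I G p Hp)) by exact (ISUB p G (extS G A) (projS G A) Hp Hw).
  rewrite E1, castPr_prsub. f_equal. apply (F_p Sg C F G A).
Qed.

Lemma CtxO_ext_eq (G' : CtxO Sg) G x A :
  proj1_sig G' = G ++ [(x, A)] ->
  exists (hG : IsCtx Sg G) (hA : IsType Sg G A),
    x = fresh G /\ G' = extS (exist _ G hG) (exist _ A hA).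
Proof.
  destruct G' as [G0 h0]; simpl; intros ->.
  pose proof (IsCtx_snoc_inv Sg _ _ _ h0) as (hG & hA & hx).
  exists hG, hA. assert (x = fresh G) by (apply hdB; auto). subst x. split; auto.
  unfold extS. simpl. f_equal. apply proof_irrelevance.
Qed.

Lemma sound G p q : Thm Sg Pi G p q ->
  forall (G' : CtxO Sg) (eG : proj1_sig G' = G) Hp Hq, hle _ (I G' p Hp) (I G' q Hq).
Proof.
  induction 1 as [G p Fp|G p q r H1 IH1 H2 IH2|G p q Fp Fq|G p q Fp Fq|G r p q H1 IH1 H2 IH2
    |G p Fp|G p q Fp Fq|G p q Fp Fq|G p q r H1 IH1 H2 IH2|G p Fp|G t p q H1 IH1|G t p q H1 IH1
    |G x A p q Fp Fall H1 IH1|G x A p q Fpw Fq H1 IH1|G x A p q Fex Fp H1 IH1|G x A p q Fq Fpw H1 IH1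
    |D G ts p q H1 IH1 Hs Fp Fq];
    intros G' eG Hp Hq.
  - subst G. rewrite (proof_irrelevance _ Hq Hp). apply hle_refl.
  - subst G. pose proof (proj2 (ThmForm Sg Pi _ _ _ H1)) as Fq.
    eapply hle_trans; [apply (IH1 G' eq_refl Hp Fq)|apply IH2; reflexivity].
  - subst G. rewrite (IA G' p q Hp Hq (inv_and2 Sg Pi _ _ _ Hp)).
    exact (proj1 (proj1 (hmeet_spec _ _ _ _) (hle_refl _ _))).
  - subst G. rewrite (IA G' p q Hp (inv_and1 Sg Pi _ _ _ Hp) Hq).
    exact (proj2 (proj1 (hmeet_spec _ _ _ _) (hle_refl _ _))).
  - subst G. rewrite (IA G' p q Hq (inv_and1 Sg Pi _ _ _ Hq) (inv_and2 Sg Pi _ _ _ Hq)).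
    apply hmeet_spec; split; [apply IH1|apply IH2]; reflexivity.
  - apply hle_top.
  - subst G. rewrite (IO G' p q Hq Hp (inv_or2 Sg Pi _ _ _ Hq)).
    exact (proj1 (proj1 (hjoin_spec _ _ _ _) (hle_refl _ _))).
  - subst G. rewrite (IO G' p q Hq (inv_or1 Sg Pi _ _ _ Hq) Hp).
    exact (proj2 (proj1 (hjoin_spec _ _ _ _) (hle_refl _ _))).
  - subst G. rewrite (IO G' p q Hp (inv_or1 Sg Pi _ _ _ Hp) (inv_or2 Sg Pi _ _ _ Hp)).
    apply hjoin_spec; split; [apply IH1|apply IH2]; reflexivity.
  - apply hbot_le.
  - subst G. rewrite (IM G' p q Hq (inv_imp1 Sg Pi _ _ _ Hq) (inv_imp2 Sg Pi _ _ _ Hq)).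
    apply himp_spec.
    pose proof (IH1 G' eq_refl (Fm_and Sg Pi _ _ _ Hp (inv_imp1 Sg Pi _ _ _ Hq)) (inv_imp2 Sg Pi _ _ _ Hq)) as K.
    rewrite (IA G' t p _ Hp (inv_imp1 Sg Pi _ _ _ Hq)) in K. exact K.
  - subst G. rewrite (IA G' t p Hp (inv_and1 Sg Pi _ _ _ Hp) (inv_and2 Sg Pi _ _ _ Hp)).
    apply himp_spec.
    pose proof (IH1 G' eq_refl (inv_and1 Sg Pi _ _ _ Hp) (Fm_imp Sg Pi _ _ _ (inv_and2 Sg Pi _ _ _ Hp) Hq)) as K.
    rewrite (IM G' p q _ (inv_and2 Sg Pi _ _ _ Hp) Hq) in K. exact K.
  -
    subst G. pose proof (inv_allX hdB Sg Pi _ _ _ _ Hq) as ex; subst x.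
    set (hA := inv_allT Sg Pi _ _ _ _ Hq). set (A' := exist _ A hA : TyS Sg G').
    pose proof (proj1 (ThmForm Sg Pi _ _ _ H1)) as Fw.
    pose proof (inv_allF hdB Sg Pi _ _ _ _ Hq) as HqF.
    rewrite (IALL G' A q Hq hA HqF).
    apply hall_adj.
    eapply hle_eq_l; [exact (eq_sym (weak_eq G' A' p Hp Fw))|].
    apply castPr_mono. apply IH1. reflexivity.
  -
    destruct (CtxO_ext_eq G' G x A eG) as (hG & hA & ex & EG). subst x G'.
    set (G0 := exist _ G hG : CtxO Sg). set (A' := exist _ A hA : TyS Sg G0).
    pose proof (proj1 (ThmForm Sg Pi _ _ _ H1)) as Fp.
    pose proof (IH1 G0 eq_refl Fp (Fm_all Sg Pi _ _ _ _ hA Fq)) as K.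
    rewrite (IALL G0 A q _ hA Fq) in K.
    apply (proj1 (hall_adj _ _ _ _ _ _)) in K.
    pose proof (hle_eq_l _ _ _ _ (weak_eq G0 A' p Fp Hp) K) as K'. clear K. rename K' into K.
    apply castPr_mono_rev in K.
    rewrite (proof_irrelevance _ Hq Fq). exact K.
  -
    subst G. pose proof (inv_exX hdB Sg Pi _ _ _ _ Hp) as ex; subst x.
    set (hA := inv_exT Sg Pi _ _ _ _ Hp). set (A' := exist _ A hA : TyS Sg G').
    pose proof (proj2 (ThmForm Sg Pi _ _ _ H1)) as Fw.
    pose proof (inv_exF hdB Sg Pi _ _ _ _ Hp) as HpF.
    rewrite (IEX G' A q Hp hA HpF).
    apply hex_adj.
    eapply hle_eq_r; [exact (weak_eq G' A' p Hq Fw)|].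
    apply castPr_mono. apply IH1. reflexivity.
  -
    destruct (CtxO_ext_eq G' G x A eG) as (hG & hA & ex & EG). subst x G'.
    set (G0 := exist _ G hG : CtxO Sg). set (A' := exist _ A hA : TyS Sg G0).
    pose proof (proj2 (ThmForm Sg Pi _ _ _ H1)) as Fp.
    pose proof (IH1 G0 eq_refl (Fm_ex Sg Pi _ _ _ _ hA Fq) Fp) as K.
    rewrite (IEX G0 A q _ hA Fq) in K.
    apply (proj1 (hex_adj _ _ _ _ _ _)) in K.
    pose proof (hle_eq_r _ _ _ _ (eq_sym (weak_eq G0 A' p Fp Hq)) K) as K'. clear K. rename K' into K.
    apply castPr_mono_rev in K.
    rewrite (proof_irrelevance _ Hp Fq). exact K.
  -
    subst D. destruct (ThmForm Sg Pi _ _ _ H1) as [FpG FqG].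
    set (G0 := exist _ G (proj1 (proj2 Hs)) : CtxO Sg).
    set (m := exist _ ts Hs : HomS Sg G' G0).
    assert (E1 : I G' (fsubst (proj1_sig G') G ts p) Hp = prsub Dh (Fmor F m) (I G0 p FpG)) by exact (ISUB p G0 G' m FpG Hp).
    assert (E2 : I G' (fsubst (proj1_sig G') G ts q) Hq = prsub Dh (Fmor F m) (I G0 q FqG)) by exact (ISUB q G0 G' m FqG Hq).
    rewrite E1, E2. apply (proj1 (prsub_hmor C Dh _ _ _)). apply IH1. reflexivity.
Qed.
End Snd.

Lemma exist_pi {A : Type} {P : A -> Prop} a b (ha : P a) (hb : P b) :
  a = b -> exist P a ha = exist P b hb.
Proof. intros ->; f_equal; apply proof_irrelevance. Qed.

Section Uniq.
Context {L : Lang} (hdB : deBruijn (LV L)) (Sg : Sig L) (Pi : PSig L)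
  (hPi : IsPredSig Sg Pi) (C : Cwf) (F : CwfMorFS Sg C) (Dh : Hyperdoctrine C)
  (Rstar : forall (R : LP L) (G : ctx L) (e : Pi R = Some G),
             hcar (Pr Dh (Fob F (exist _ G (hPi R G e))))).

Section OneMor.
Context (Gm : forall G : CtxO Sg, PrS Sg Pi G -> hcar (Pr Dh (Fob F G)))
  (FB : FBasedMor F Dh Gm) (IP : InterpretsPreds F Dh hPi Rstar Gm).

Lemma U_atom (G : CtxO Sg) R ts H G' (e : Pi R = Some G') h :
  Gm G (exist _ (fatom R ts) H) =
  prsub Dh (@Fmor _ _ _ F G (exist _ G' (hPi R G' e)) (exist _ ts h)) (Rstar R G' e).
Proof.
  destruct FB as (_ & Hsub & _ & _).
  set (G'o := exist _ G' (hPi R G' e) : CtxO Sg).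
  assert (h0 : Form Sg Pi G' (fatom R (map tvar (OV G')))).
  { econstructor; eauto. apply SubstMor_id. apply hPi with R; auto. }
  assert (Eq : fsubst (proj1_sig G) G' ts (fatom R (map tvar (OV G'))) = fatom R ts).
  { simpl. f_equal. rewrite map_map. simpl. apply lookup_nodup.
    - apply IsCtx_nodup with Sg. apply hPi with R; auto.
    - destruct h as (_&_&hl&_). rewrite hl, OV_length. reflexivity. }
  assert (hs : Form Sg Pi (proj1_sig G) (fsubst (proj1_sig G) G' ts (fatom R (map tvar (OV G'))))).
  { rewrite Eq. exact H. }
  pose proof (Hsub G G'o (exist _ ts h) (exist _ _ h0) hs) as K.
  pose proof (IP R G' e h0) as K2.
  transitivity (Gm G (exist _ _ hs)). { f_equal. apply exist_pi. symmetry; exact Eq. }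
  etransitivity; [exact K|]. f_equal. exact K2.
Qed.

Lemma U_top (G : CtxO Sg) H : Gm G (exist _ ftop H) = htop _.
Proof.
  destruct FB as (Hh & _). destruct (Hh G) as (_ & Ht & _).
  rewrite <- Ht. f_equal. apply exist_pi. reflexivity.
Qed.
Lemma U_bot (G : CtxO Sg) H : Gm G (exist _ fbot H) = hbot _.
Proof.
  destruct FB as (Hh & _). destruct (Hh G) as (_ & _ & Hb & _).
  rewrite <- Hb. f_equal. apply exist_pi. reflexivity.
Qed.
Lemma U_and (G : CtxO Sg) p q H :
  Gm G (exist _ (fand p q) H) =
  hmeet _ (Gm G (exist _ p (inv_and1 Sg Pi _ _ _ H))) (Gm G (exist _ q (inv_and2 Sg Pi _ _ _ H))).
Proof.
  destruct FB as (Hh & _). destruct (Hh G) as (_ & _ & _ & Hm & _).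
  rewrite <- Hm. f_equal. apply exist_pi. reflexivity.
Qed.
Lemma U_or (G : CtxO Sg) p q H :
  Gm G (exist _ (forr p q) H) =
  hjoin _ (Gm G (exist _ p (inv_or1 Sg Pi _ _ _ H))) (Gm G (exist _ q (inv_or2 Sg Pi _ _ _ H))).
Proof.
  destruct FB as (Hh & _). destruct (Hh G) as (_ & _ & _ & _ & Hj & _).
  rewrite <- Hj. f_equal. apply exist_pi. reflexivity.
Qed.
Lemma U_imp (G : CtxO Sg) p q H :
  Gm G (exist _ (fimp p q) H) =
  himp _ (Gm G (exist _ p (inv_imp1 Sg Pi _ _ _ H))) (Gm G (exist _ q (inv_imp2 Sg Pi _ _ _ H))).
Proof.
  destruct FB as (Hh & _). destruct (Hh G) as (_ & _ & _ & _ & _ & Hi).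
  rewrite <- Hi. f_equal. apply exist_pi. reflexivity.
Qed.
Lemma U_all (G : CtxO Sg) A q H hA Hq :
  Gm G (exist _ (fall (fresh (proj1_sig G)) A q) H) =
  hall Dh (Fsig F (exist _ A hA)) (castPr Dh (F_ext F G (exist _ A hA))
     (Gm (extS G (exist _ A hA)) (exist _ q Hq))).
Proof.
  destruct FB as (_ & _ & Ha & _).
  rewrite <- (Ha G (exist _ A hA) (exist _ q Hq)). f_equal. apply exist_pi. reflexivity.
Qed.
Lemma U_ex (G : CtxO Sg) A q H hA Hq :
  Gm G (exist _ (fex (fresh (proj1_sig G)) A q) H) =
  hex Dh (Fsig F (exist _ A hA)) (castPr Dh (F_ext F G (exist _ A hA))
     (Gm (extS G (exist _ A hA)) (exist _ q Hq))).
Proof.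
  destruct FB as (_ & _ & _ & He).
  rewrite <- (He G (exist _ A hA) (exist _ q Hq)). f_equal. apply exist_pi. reflexivity.
Qed.
End OneMor.

Lemma uniq (Gm1 Gm2 : forall G : CtxO Sg, PrS Sg Pi G -> hcar (Pr Dh (Fob F G)))
  (FB1 : FBasedMor F Dh Gm1) (IP1 : InterpretsPreds F Dh hPi Rstar Gm1)
  (FB2 : FBasedMor F Dh Gm2) (IP2 : InterpretsPreds F Dh hPi Rstar Gm2) :
  forall p (G : CtxO Sg) H, Gm1 G (exist _ p H) = Gm2 G (exist _ p H).
Proof.
  induction p as [R us| | |p1 IH1 p2 IH2|p1 IH1 p2 IH2|p1 IH1 p2 IH2|x A q IH|x A q IH];
    intros G H.
  - destruct (Pi R) as [G'|] eqn:e.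
    2:{ exfalso; eapply inv_atom_none; eauto. }
    rewrite (U_atom Gm1 FB1 IP1 G R us H G' e (inv_atom Sg Pi _ _ _ _ H e)).
    rewrite (U_atom Gm2 FB2 IP2 G R us H G' e (inv_atom Sg Pi _ _ _ _ H e)).
    reflexivity.
  - rewrite (U_bot Gm1 FB1), (U_bot Gm2 FB2); reflexivity.
  - rewrite (U_top Gm1 FB1), (U_top Gm2 FB2); reflexivity.
  - rewrite (U_and Gm1 FB1), (U_and Gm2 FB2); f_equal; auto.
  - rewrite (U_or Gm1 FB1), (U_or Gm2 FB2); f_equal; auto.
  - rewrite (U_imp Gm1 FB1), (U_imp Gm2 FB2); f_equal; auto.
  - pose proof (inv_allX hdB Sg Pi _ _ _ _ H) as ex; subst x.
    rewrite (U_all Gm1 FB1 G A q H (inv_allT Sg Pi _ _ _ _ H) (inv_allF hdB Sg Pi _ _ _ _ H)).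
    rewrite (U_all Gm2 FB2 G A q H (inv_allT Sg Pi _ _ _ _ H) (inv_allF hdB Sg Pi _ _ _ _ H)).
    f_equal; f_equal; auto.
  - pose proof (inv_exX hdB Sg Pi _ _ _ _ H) as ex; subst x.
    rewrite (U_ex Gm1 FB1 G A q H (inv_exT Sg Pi _ _ _ _ H) (inv_exF hdB Sg Pi _ _ _ _ H)).
    rewrite (U_ex Gm2 FB2 G A q H (inv_exT Sg Pi _ _ _ _ H) (inv_exF hdB Sg Pi _ _ _ _ H)).
    f_equal; f_equal; auto.
Qed.

Notation I := (interp hdB Sg Pi hPi C F Dh Rstar).

Definition GmI : forall G : CtxO Sg, PrS Sg Pi G -> hcar (Pr Dh (Fob F G)) :=
  fun G x => I G (proj1_sig x) (proj2_sig x).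

Lemma GmI_FB : FBasedMor F Dh GmI.
Proof.
  unfold GmI. split; [|split; [|split]].
  - intro G. split; [|split; [|split; [|split; [|split]]]].
    + intros [x hx] [y hy] Hxy. simpl in *.
      exact (sound hdB Sg Pi hPi C F Dh Rstar _ _ _ Hxy G eq_refl hx hy).
    + reflexivity.
    + reflexivity.
    + intros [x hx] [y hy]. apply interp_and.
    + intros [x hx] [y hy]. apply interp_or.
    + intros [x hx] [y hy]. apply interp_imp.
  - intros D G m [p hp] h. exact (interp_subst hdB Sg Pi hPi C F Dh Rstar p G D m hp h).
  - intros G [A hA] [q hq]. exact (interp_all hdB Sg Pi hPi C F Dh Rstar G A q _ hA hq).
  - intros G [A hA] [q hq]. exact (interp_ex hdB Sg Pi hPi C F Dh Rstar G A q _ hA hq).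
Qed.

Lemma GmI_IP : InterpretsPreds F Dh hPi Rstar GmI.
Proof.
  intros R G e h. unfold GmI. simpl.
  rewrite (atomI_eq Sg Pi hPi C F Dh Rstar (exist _ G (hPi R G e)) R _ h G e (SubstMor_id Sg G (hPi R G e))).
  rewrite (F_id Sg C F). apply prsub_id.
Qed.
End Uniq.

Theorem mainTheorem19 (L : Lang) (hdB : deBruijn (LV L))
  (Sg : Sig L) (hSg : IsSignature Sg)
  (C : Cwf) (F : CwfMorFS Sg C)
  (Pi : PSig L) (hPi : IsPredSig Sg Pi)
  (Dh : Hyperdoctrine C)
  (Rstar : forall (R : LP L) (G : ctx L) (e : Pi R = Some G),
             hcar (Pr Dh (Fob F (exist _ G (hPi R G e))))) :
  exists Gm : (forall G : CtxO Sg, PrS Sg Pi G -> hcar (Pr Dh (Fob F G))),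
    FBasedMor F Dh Gm /\ InterpretsPreds F Dh hPi Rstar Gm /\
    (forall Gm' : (forall G : CtxO Sg, PrS Sg Pi G -> hcar (Pr Dh (Fob F G))),
       FBasedMor F Dh Gm' -> InterpretsPreds F Dh hPi Rstar Gm' ->
       forall (G : CtxO Sg) (p : PrS Sg Pi G), Gm' G p = Gm G p).
Proof.
  exists (GmI hdB Sg Pi hPi C F Dh Rstar).
  split; [apply GmI_FB|split; [apply GmI_IP|]].
  intros Gm' FB' IP' G [p H].
  apply (uniq hdB Sg Pi hPi C F Dh Rstar Gm' _ FB' IP'
           (GmI_FB hdB Sg Pi hPi C F Dh Rstar) (GmI_IP hdB Sg Pi hPi C F Dh Rstar)).
Qed.
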